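(* Let $m>0$ be an even integer and suppose that $s=(s_A,s_B)$ is a classical deterministic winning strategy for the matching game with parameter $m$. Then there is a set $R$ of bit strings of length $m$ such that the following hold simultaneously: (1) $|R|\ge \dfrac{2^m}{2^{\lceil\log_2 m\rceil}}$; (2) the graph $G_s$ contains a connected component with more than $\frac{m}{2}$ vertices; (3) for each $\{i,j\}\in E_s$, the value $r_i\oplus r_j$ is the same for every $r\in R$.
   Context: A perfect matching on $\{0,\ldots,m-1\}$ ($m$ even) is a partition of this set into $m/2$ sets of cardinality 2; $M_m$ denotes the set of all perfect matchings. Let $L=\lceil\log_2 m\rceil$. For $n\in\{0,\ldots,m-1\}$, $\bar n\in\{0,1\}^L$ is the $L$-bit binary representation of $n$, most significant bit first. On bit strings $\oplus$ is bitwise, and $u\cdot v=\bigoplus_i(u_i\wedge v_i)$. The matching game with parameter $m$: Alice receives $x\in\{0,1\}^m$ and outputs $a\in\{0,1\}^L$; Bob receives $y\in M_m$ and outputs a two-element set $\{b_1,b_2\}\subseteq\{0,\ldots,m-1\}$ and a string $b\in\{0,1\}^L$; they win on question $(x,y)$ iff $\{b_1,b_2\}\in y$ and $x_{b_1}\oplus x_{b_2}=(\bar b_1\oplus\bar b_2)\cdot(a\oplus b)$. A classical deterministic strategy is a pair of functions $s_A:\{0,1\}^m\to\{0,1\}^L$ and $s_B:M_m\to\{\text{two-element subsets of }\{0,\ldots,m-1\}\}\times\{0,1\}^L$; it is winning if $(s_A(x),s_B(y))$ wins on every question $(x,y)\in\{0,1\}^m\times M_m$. For such $s$, $G_s=(V,E_s)$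 is the graph with vertex set $V=\{0,1,\ldots,m-1\}$ whose edge set $E_s$ consists of all two-element sets $\{i,j\}$ that Bob outputs (as the first component of $s_B(y)$) for at least one input $y\in M_m$. A connected component of a graph is a nonempty maximal connected induced subgraph; its cardinality is its number of vertices. *)

(* Defs.v *)
From mathcomp Require Import all_boot.
Set Implicit Arguments. Unset Strict Implicit. Unset Printing Implicit Defensive.

(* L = ceil(log2 m): smallest e with m <= 2^e (0 for m <= 1). *)
Definition Lm (m : nat) : nat := up_log 2 m.

Definition bits (n : nat) := {ffun 'I_n -> bool}.

(* L-bit binary representation, most significant bit first:
   bit k is the coefficient of 2^(L-1-k). *)
Definition bin (L n : nat) : bits L := [ffun k : 'I_L => odd (n %/ 2 ^ (L.-1 - k))].

Definition bxor (L : nat) (u v : bits L) : bits L := [ffun k => u k (+) v k].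

Definition bdot (L : nat) (u v : bits L) : bool := \big[xorb/false]_(k < L) (u k && v k).

Definition is_pm (m : nat) (y : {set {set 'I_m}}) : bool :=
  partition y [set: 'I_m] && [forall e in y, #|e| == 2].

Definition matching (m : nat) := {y : {set {set 'I_m}} | is_pm y}.

(* Alice's strategy: s_A : {0,1}^m -> {0,1}^L.
   Bob's strategy: s_B : M_m -> (b1, b2) * {0,1}^L, the output set being {b1,b2}. *)
Definition stratA (m : nat) := bits m -> bits (Lm m).
Definition stratB (m : nat) := matching m -> ('I_m * 'I_m) * bits (Lm m).

Definition wins (m : nat) (x : bits m) (y : matching m) (a : bits (Lm m))
    (o : ('I_m * 'I_m) * bits (Lm m)) : bool :=
  let: ((b1, b2), b) := o in
  ([set b1; b2] \in val y) &&
  (x b1 (+) x b2 == bdot (bxor (bin (Lm m) b1) (bin (Lm m) b2)) (bxor a b)).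

Definition winning (m : nat) (sA : stratA m) (sB : stratB m) : Prop :=
  forall (x : bits m) (y : matching m), wins x y (sA x) (sB y).

Definition Es (m : nat) (sB : stratB m) : {set {set 'I_m}} :=
  [set [set (sB y).1.1; (sB y).1.2] | y : matching m].

Definition adj (m : nat) (sB : stratB m) : rel 'I_m :=
  fun i j => [set i; j] \in Es sB.

Definition component (m : nat) (sB : stratB m) (v : 'I_m) : {set 'I_m} :=
  [set w | connect (adj sB) v w].

(* Main.v *)
Require Import Defs.
From mathcomp Require Import all_boot.
From mathcomp Require Import zify.

Set Implicit Arguments. Unset Strict Implicit. Unset Printing Implicit Defensive.

Lemma modwrap p h m : p < m -> h < m ->
  (p + h) %% m = if p + h < m then p + h else p + h - m.
Proof. move=> lp lh; case: ltnP => H; first by rewrite modn_small.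
by rewrite -{1}(subnK H) modnDr modn_small //; lia. Qed.

Lemma invol_exists (m : nat) (hm : 0 < m) (he : ~~ odd m) (k : 'I_m -> nat)
  (hk : forall v, 2 * #|[set w | k w == k v]| <= m) :
  exists f : 'I_m -> 'I_m,
    [/\ forall v, f (f v) = v, forall v, f v != v & forall v, k (f v) != k v].
Proof.
pose leT := fun u v : 'I_m => k u <= k v.
set s := sort leT (enum 'I_m).
have ss : size s = m by rewrite size_sort size_enum_ord.
have us : uniq s by rewrite sort_uniq enum_uniq.
have ms : forall v, v \in s by move=> v; rewrite mem_sort mem_enum.
have so : sorted leT s by apply: sort_sorted => u v; apply: leq_total.
pose x0 : 'I_m := Ordinal hm.
set h := m./2.
have mh : m = h + h.
  by have E := odd_double_half m; rewrite (negbTE he) -addnn add0n in E; rewrite /h; lia.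
have hpos : 0 < h by lia.
have trT : transitive leT by move=> a b c; rewrite /leT; apply: leq_trans.
have key : forall a, a + h < m -> k (nth x0 s a) != k (nth x0 s (a + h)).
  move=> a ah; apply/negP => /eqP eqk.
  have mid : forall c, c <= h -> k (nth x0 s (a + c)) = k (nth x0 s a).
    move=> c ch; apply/eqP; rewrite eqn_leq; apply/andP; split.
      rewrite eqk; apply: (sorted_leq_nth trT _ x0 so); rewrite ?inE ?ss //; try lia.
      by move=> x; rewrite /leT.
    apply: (sorted_leq_nth trT _ x0 so); rewrite ?inE ?ss //; try lia.
    by move=> x; rewrite /leT.
  pose g := fun c : 'I_h.+1 => nth x0 s (a + c).
  have ginj : injective g.
    move=> c1 c2; have := ltn_ord c1; have := ltn_ord c2 => l2 l1.
    rewrite /g => /eqP; rewrite nth_uniq ?ss //; try lia.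
    move/eqP=> e; apply/val_inj.
    exact: (addnI e).
  have := hk (nth x0 s a).
  have : #|g @: [set: 'I_h.+1]| <= #|[set w | k w == k (nth x0 s a)]|.
    apply: subset_leq_card; apply/subsetP => w /imsetP[c _ ->].
    by rewrite inE /g mid //; have := ltn_ord c; lia.
  by rewrite card_imset // cardsT card_ord; lia.
pose f := fun v => nth x0 s ((index v s + h) %% m).
have ilt : forall v, index v s < m by move=> v; have := index_mem v s; rewrite ms ss.
have pf : forall v, index (f v) s = (index v s + h) %% m.
  by move=> v; rewrite index_uniq // ss ltn_pmod.
exists f; split.
- move=> v; rewrite /f pf modnDml -addnA -mh modnDr modn_small // nth_index //.
- move=> v; apply/negP => /eqP e.
  have := congr1 (fun w => index w s) e; rewrite /= pf.
  have := ilt v; rewrite modwrap ?ilt //; try lia; case: ifP; lia.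
- move=> v; rewrite /f; have := ilt v; set p := index v s => lt.
  rewrite modwrap //; try lia.
  case: ifP => hl.
    by have := key _ hl; rewrite /p nth_index // eq_sym.
  move/negbT: hl => hl.
  have := key (p + h - m) ltac:(lia).
  rewrite (_ : p + h - m + h = p); last lia.
  by rewrite /p nth_index.
Qed.

Lemma pm_of_invol m (f : 'I_m -> 'I_m) (finv : forall v, f (f v) = v)
  (fne : forall v, f v != v) : is_pm [set [set v; f v] | v : 'I_m].
Proof.
apply/andP; split; last first.
  by apply/forall_inP => B /imsetP[v _ ->]; rewrite cards2 (eq_sym v) fne.
apply/and3P; split.
- apply/eqP/setP => w; rewrite inE; apply/bigcupP; exists [set w; f w].
    by apply/imsetP; exists w.
  by rewrite set21.
- apply/trivIsetP => A B /imsetP[u _ ->] /imsetP[v _ ->] neq.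
  rewrite -setI_eq0; apply/eqP/setP => w; rewrite in_setI in_set0.
  apply/negbTE/negP => /andP[/set2P H1 /set2P H2].
  move/negP: neq; apply; apply/eqP.
  case: H1 H2 => -> [E|E].
  + by rewrite E.
  + by rewrite E finv setUC.
  + by rewrite -E finv setUC.
  + by rewrite (_ : u = v) // -(finv u) E finv.
- apply/negP => /imsetP[v _ e].
  have : v \in (set0 : {set 'I_m}) by rewrite e set21.
  by rewrite inE.
Qed.

Theorem lemma2 (m : nat) (hm : 0 < m) (heven : ~~ odd m)
    (sA : stratA m) (sB : stratB m) (hwin : winning sA sB) :
  exists R : {set bits m},
    [/\ 2 ^ m <= #|R| * 2 ^ Lm m,
        exists v : 'I_m, m < 2 * #|component sB v|
      & forall i j : 'I_m, [set i; j] \in Es sB ->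
          forall r1 r2, r1 \in R -> r2 \in R ->
            r1 i (+) r1 j = r2 i (+) r2 j].
Proof.
pose x0 : bits m := [ffun => false].
pose Ra a := [set x : bits m | sA x == a].
pose a := [arg max_(a > sA x0) #|Ra a|].
have amax : forall b, #|Ra b| <= #|Ra a|.
  by rewrite /a; case: arg_maxnP => //= c _ Hc b; apply: Hc.
exists (Ra a); split.
- have e1 : #|[set: bits m]| = 2 ^ m by rewrite cardsT /bits card_ffun card_bool card_ord.
  have e2 : #|[set: bits (Lm m)]| = 2 ^ Lm m by rewrite cardsT /bits card_ffun card_bool card_ord.
  have -> : 2 ^ m = \sum_(b : bits (Lm m)) #|Ra b|.
    rewrite -e1 -sum1_card (partition_big sA xpredT) //=.
    apply: eq_bigr => b _; rewrite -sum1_card; by apply: eq_bigl => x; rewrite !inE.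
  have : \sum_(b : bits (Lm m)) #|Ra b| <= \sum_(b : bits (Lm m)) #|Ra a|.
    by apply: leq_sum => c _; apply: amax.
  move/leq_trans; apply.
  by rewrite sum_nat_const -cardsT e2 mulnC.
- case: (boolP [exists v, m < 2 * #|component sB v|]) => [/existsP //|/existsPn H].
  exfalso.
  pose e := adj sB.
  have esym : symmetric e by move=> u v; rewrite /e /adj setUC.
  have csym := sym_connect_sym esym.
  pose k := fun v => val (root e v).
  have hk : forall v, 2 * #|[set w | k w == k v]| <= m.
    move=> v; have := H v; rewrite -leqNgt.
    rewrite (_ : [set w | k w == k v] = component sB v) //.
    apply/setP => w; rewrite !inE /k val_eqE (root_connect csym); exact: (csym w v).
  have [f [finv fne fk]] := invol_exists hm heven hk.
  pose y : matching m := exist (fun y => is_true (is_pm y)) _ (pm_of_invol finv fne).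
  have := hwin x0 y; rewrite /wins.
  have inEs : [set (sB y).1.1; (sB y).1.2] \in Es sB by apply/imsetP; exists y.
  move: inEs; case: (sB y) => [[b1 b2] b] /= inEs /andP[iny _].
  move: iny => /imsetP[v _ ev]; rewrite ev in inEs.
  have : connect e v (f v) by apply: connect1.
  rewrite -(root_connect csym) => /eqP er.
  by move: (fk v); rewrite /k er eqxx.
- move=> i j /imsetP[y _ Eij] r1 r2; rewrite !inE => /eqP h1 /eqP h2.
  have w1 := hwin r1 y; have w2 := hwin r2 y; rewrite /wins in w1 w2.
  move: Eij w1 w2; case: (sB y) => [[b1 b2] b] /= Eij.
  rewrite h1 h2 => /andP[_ /eqP e1] /andP[_ /eqP e2].
  have key : r1 b1 (+) r1 b2 = r2 b1 (+) r2 b2 by rewrite e1 e2.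
  case: (eqVneq i j) => [->|nij]; first by rewrite !addbb.
  have : i \in [set b1; b2] by rewrite -Eij set21.
  have : j \in [set b1; b2] by rewrite -Eij set22.
  move=> /set2P[] -> /set2P[] E; subst;
    try (by rewrite eqxx in nij); try exact: key.
  all: try by rewrite !addbb.
  all: by rewrite [LHS]addbC key addbC.
Qed.
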